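(* Let $G=(V,E)$ be a circular arc graph which is not an interval graph, let $M=(C,\mathcal A)$ be a circular arc model of $G$, let $p$ be a point of $C$, let $A$ be the set of vertices whose arcs contain $p$, and $B=V\setminus A$. Let $G'=(V,E')$ with $E'=E\cup\{\{u',v'\}: u',v'\in B,\ u'\ne v'\}$, and let $\{I_1',\dots,I_b'\}$ be a box representation of $G'$ of dimension $b=\mathrm{box}(G')$. Let $I$ be an interval representation of the subgraph of $G$ induced on $B$, and let $I'$ be the extension of $I$ on $V$. Then $\mathcal B=\{I_1',\dots,I_b',I'\}$ is a box representation of $G$ and $|\mathcal B|\le 2\,\mathrm{box}(G)+1$.
   Context: A circular arc model of $G$ consists of a circle $C$ and arcs of $C$, one per vertex, such that two vertices are adjacent iff their arcs intersect. An interval graph is the intersection graph of a finite family of intervals of the real line; an interval representation assigns to each vertex $u$ an interval $[l_u,r_u]$ (non-degenerate). A box representation of dimension $k$ of $G=(V,E)$ is a family of $k$ interval graphs $I_1,\dots,I_k$ on vertex set $V$ with $E=E(I_1)\cap\cdots\cap E(I_k)$; $\mathrm{box}(G)$ is the minimum such $k$. Extension: if $I$ is an interval representation of an interval graph on vertex set $W\subseteq V$, with $l=\min_{u\in W} l_u$ and $r=\max_{u\in W} r_u$, the extension of $I$ on $V$ is the interval representation on $V$ assigning $[l_u,r_u]$ to each $u\in W$ and $[l,r]$ to each $u\in V\setminus W$ (so every vertex of $V\setminus W$ is adjacent to all other vertices). *)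

(* Defs.v *)
From Stdlib Require Import Reals.
From mathcomp Require Import all_boot.

Set Implicit Arguments.
Unset Strict Implicit.
Unset Printing Implicit Defensive.

Local Open Scope R_scope.

Definition graph (V : Type) := V -> V -> Prop.

(* An interval representation assigns to each vertex u the interval [fst (f u), snd (f u)]. *)
Definition interval_rep (V : Type) := V -> (R * R).

Definition rep_valid_on (V : Type) (W : V -> Prop) (f : interval_rep V) : Prop :=
  forall u, W u -> fst (f u) < snd (f u).

Definition rep_valid (V : Type) (f : interval_rep V) : Prop :=
  rep_valid_on (fun _ => True) f.

Definition intervals_meet (V : Type) (f : interval_rep V) (u v : V) : Prop :=
  fst (f u) <= snd (f v) /\ fst (f v) <= snd (f u).

Definition rep_graph (V : Type) (f : interval_rep V) : graph V :=
  fun u v => u <> v /\ intervals_meet f u v.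

Definition is_interval_rep_on (V : Type) (W : V -> Prop) (E : graph V)
    (f : interval_rep V) : Prop :=
  rep_valid_on W f /\
  forall u v, W u -> W v -> u <> v -> (E u v <-> intervals_meet f u v).

Definition is_interval_graph (V : Type) (E : graph V) : Prop :=
  exists f : interval_rep V, rep_valid f /\
    forall u v, E u v <-> rep_graph f u v.

Definition box_rep (V : Type) (E : graph V) (Is : seq (graph V)) : Prop :=
  (forall I, List.In I Is -> is_interval_graph I) /\
  forall u v, u <> v -> (E u v <-> forall I, List.In I Is -> I u v).

Definition min_box_rep (V : Type) (E : graph V) (Is : seq (graph V)) : Prop :=
  box_rep E Is /\ forall Js, box_rep E Js -> (size Is <= size Js)%N.

(* The circle C is R/Z (circumference 1); a point of C is given by any real t.
   An arc is a pair (s, len): it starts at s and runs counterclockwise for length len,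
   with 0 < len < 1 (a non-degenerate proper closed arc). *)
Definition circ_arc := (R * R)%type.

Definition arc_valid (a : circ_arc) : Prop := 0 < snd a < 1.

Definition in_arc (t : R) (a : circ_arc) : Prop := frac_part (t - fst a) <= snd a.

Definition in_arc_b (t : R) (a : circ_arc) : bool :=
  if Rle_dec (frac_part (t - fst a)) (snd a) then true else false.

Definition arcs_meet (a b : circ_arc) : Prop := exists t : R, in_arc t a /\ in_arc t b.

Definition is_ca_model (V : Type) (E : graph V) (M : V -> circ_arc) : Prop :=
  (forall v, arc_valid (M v)) /\
  forall u v, u <> v -> (E u v <-> arcs_meet (M u) (M v)).

Definition is_simple_graph (V : Type) (E : graph V) : Prop :=
  (forall u, ~ E u u) /\ (forall u v, E u v -> E v u).

Definition is_circular_arc_graph (V : Type) (E : graph V) : Prop :=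
  exists M : V -> circ_arc, is_ca_model E M.

Definition seq_min (s : seq R) : R :=
  match s with [::] => 0 | x :: s' => foldr Rmin x s' end.
Definition seq_max (s : seq R) : R :=
  match s with [::] => 0 | x :: s' => foldr Rmax x s' end.

Definition extension (V : finType) (W : pred V) (f : interval_rep V) : interval_rep V :=
  fun u => if W u then f u
           else (seq_min [seq fst (f w) | w <- enum W],
                 seq_max [seq snd (f w) | w <- enum W]).

(* Main.v *)
Require Import Defs.
From Stdlib Require Import Reals Lra.
From mathcomp Require Import all_boot.

Local Open Scope R_scope.

Lemma foldr_Rmin_le (x : R) (s : seq R) :
  foldr Rmin x s <= x /\ forall y, List.In y s -> foldr Rmin x s <= y.
Proof.
elim: s => [|a s [IH1 IH2]] /=.
- split; [apply Rle_refl | by []].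
- split.
  + apply: Rle_trans (Rmin_r _ _) IH1.
  + move=> y [<-|Hy]; first by apply Rmin_l.
    apply: Rle_trans (Rmin_r _ _) (IH2 _ Hy).
Qed.

Lemma foldr_Rmax_ge (x : R) (s : seq R) :
  x <= foldr Rmax x s /\ forall y, List.In y s -> y <= foldr Rmax x s.
Proof.
elim: s => [|a s [IH1 IH2]] /=.
- split; [apply Rle_refl | by []].
- split.
  + apply: Rle_trans IH1 (Rmax_r _ _).
  + move=> y [<-|Hy]; first by apply Rmax_l.
    apply: Rle_trans (IH2 _ Hy) (Rmax_r _ _).
Qed.

Lemma seq_min_le (s : seq R) y : List.In y s -> seq_min s <= y.
Proof.
case: s => [|x s] //= [<-|Hy]; first by case: (foldr_Rmin_le x s).
by case: (foldr_Rmin_le x s) => _ H; apply H.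
Qed.

Lemma seq_max_ge (s : seq R) y : List.In y s -> y <= seq_max s.
Proof.
case: s => [|x s] //= [<-|Hy]; first by case: (foldr_Rmax_ge x s).
by case: (foldr_Rmax_ge x s) => _ H; apply H.
Qed.

Lemma in_map_In (T : eqType) (h : T -> R) (s : seq T) w :
  w \in s -> List.In (h w) (map h s).
Proof.
elim: s => [|a s IH] //=; rewrite in_cons => /orP [/eqP ->|Hw]; [left|right] => //.
by apply IH.
Qed.

Lemma lower_bound (V : finType) (h : V -> R) : exists L, forall u, L < h u.
Proof.
suff: forall s : seq V, exists L, forall u, u \in s -> L < h u.
  move=> /(_ (index_enum V)) [L HL]; exists L => u; apply HL; exact: mem_index_enum.
elim => [|x s [L HL]]; first by exists 0.
exists (Rmin L (h x) - 1) => u; rewrite in_cons => /orP [/eqP ->|Hu].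
- have := Rmin_r L (h x); lra.
- have := Rmin_l L (h x); have := HL u Hu; lra.
Qed.

Lemma upper_bound (V : finType) (h : V -> R) : exists U, forall u, h u < U.
Proof.
have [L HL] := lower_bound _ (fun u => - h u).
exists (- L) => u; have := HL u; lra.
Qed.

Lemma In_rcons (T : Type) (s : seq T) x I : List.In I (rcons s x) <-> List.In I s \/ I = x.
Proof.
elim: s => [|a s IH] /=; first by split; [move=> [<-|[]]; right | move=> [[]|->]; left].
rewrite IH; tauto.
Qed.

Lemma double (V : finType) (B : pred V) (Js : seq (graph V)) :
  (forall J, List.In J Js -> is_interval_graph J) ->
  exists Ks : seq (graph V), size Ks = (2 * size Js)%N /\
    (forall K, List.In K Ks -> is_interval_graph K) /\
    forall u v, u <> v -> ((forall K, List.In K Ks -> K u v) <->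
       ((B u /\ B v) \/ forall J, List.In J Js -> J u v)).
Proof.
elim: Js => [|J Js IH] HJs.
- exists [::]; split => //; split => // u v _; split => _; [right|] => //.
- have [Ks [Hsz [HKs HKE]]] : exists Ks : seq (graph V), size Ks = (2 * size Js)%N /\
    (forall K, List.In K Ks -> is_interval_graph K) /\
    forall u v, u <> v -> ((forall K, List.In K Ks -> K u v) <->
       ((B u /\ B v) \/ forall J, List.In J Js -> J u v)).
    by apply IH => J' HJ'; apply HJs; right.
  have [g [Hgv HgJ]] : is_interval_graph J by apply HJs; left.
  have [L HL] := lower_bound _ (fun u => fst (g u)).
  have [U HU] := upper_bound _ (fun u => snd (g u)).
  pose g1 := fun w => if B w then (L, snd (g w)) else g w.
  pose g2 := fun w => if B w then (fst (g w), U) else g w.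
  have core : forall u v, intervals_meet g1 u v /\ intervals_meet g2 u v <->
      (B u /\ B v) \/ intervals_meet g u v.
    move=> u v; have := HL u; have := HL v; have := HU u; have := HU v.
    have := Hgv u I; have := Hgv v I.
    rewrite /g1 /g2 /intervals_meet /=.
    case: (B u); case: (B v) => /= *; split;
      (try by move=> [[? ?] [? ?]]; first [left; split; reflexivity | right; split; lra]);
      move=> [[Hb1 Hb2] | [? ?]]; try discriminate; split; split; lra.
  exists (rep_graph g1 :: rep_graph g2 :: Ks); split.
    by rewrite /= Hsz mulnS.
  split.
  + move=> K /= [<-|[<-|HK]]; last by apply HKs.
    * exists g1; split => // u _; rewrite /g1; case: (B u) => /=;
        [have := HL u; have := Hgv u I; lra | exact: Hgv].
    * exists g2; split => // u _; rewrite /g2; case: (B u) => /=;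
        [have := HU u; have := Hgv u I; lra | exact: Hgv].
  + move=> u v Huv.
    have H1 : (forall K, List.In K (rep_graph g1 :: rep_graph g2 :: Ks) -> K u v) <->
      (rep_graph g1 u v /\ rep_graph g2 u v /\ forall K, List.In K Ks -> K u v).
      split; first by move=> H; split; [apply H; left|split; [apply H; right; left|
        move=> K HK; apply H; right; right]].
      by move=> [? [? H]] K /= [<-|[<-|HK]] //; apply H.
    have H2 : (forall J', List.In J' (J :: Js) -> J' u v) <->
      (J u v /\ forall J', List.In J' Js -> J' u v).
      split; first by move=> H; split; [apply H; left | move=> J' HJ'; apply H; right].
      by move=> [? H] J' /= [<-|HJ'] //; apply H.
    rewrite H1 H2 HKE // HgJ /rep_graph.
    have := core u v; tauto.
Qed.

Lemma ext_facts (V : finType) (B : pred V) (f : interval_rep V) :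
  rep_valid_on (fun v => B v) f ->
  let m := seq_min [seq fst (f w) | w <- enum B] in
  let M := seq_max [seq snd (f w) | w <- enum B] in
  (forall v, B v -> m <= fst (f v)) /\ (forall v, B v -> snd (f v) <= M) /\ m <= M.
Proof.
move=> Hfv m M.
have H1 : forall v, B v -> m <= fst (f v).
  by move=> v Hv; apply seq_min_le; apply (in_map_In _ (fun w => fst (f w))); rewrite mem_enum.
have H2 : forall v, B v -> snd (f v) <= M.
  by move=> v Hv; apply seq_max_ge; apply (in_map_In _ (fun w => snd (f w))); rewrite mem_enum.
split => //; split => //.
rewrite /m /M; case Henum: (enum B) => [|w s]; first by rewrite /=; lra.
have : w \in enum B by rewrite Henum mem_head.
rewrite mem_enum => Hw.
rewrite -Henum -/m -/M; have := H1 w Hw; have := H2 w Hw; have := Hfv w Hw; lra.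
Qed.

Local Close Scope R_scope.

Theorem lemma7 (V : finType) (E : graph V) (M : V -> circ_arc) (p : R)
  (Is' : seq (graph V)) (f : interval_rep V) :
  is_simple_graph E ->
  is_ca_model E M ->
  ~ is_interval_graph E ->
  let A : pred V := fun v => in_arc_b p (M v) in
  let B : pred V := fun v => ~~ A v in
  let E' : graph V := fun u v => E u v \/ (B u /\ B v /\ u <> v) in
  min_box_rep E' Is' ->
  is_interval_rep_on (fun v => B v) E f ->
  let I' := extension B f in
  let calB := rcons Is' (rep_graph I') in
  box_rep E calB /\
  (forall Js, box_rep E Js -> (size calB <= 2 * size Js + 1)%N).
Proof.
move=> _ _ _ A B E' [[HIsint HIsE] HIsmin] [Hfv Hf] I' calB.
clearbody B.
have [Hm [HM HmM]] := ext_facts _ _ _ Hfv.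
set m := seq_min _ in Hm HM HmM.
set Mx := seq_max _ in HM HmM.
have HI' : forall u v, intervals_meet I' u v <-> (B u -> B v -> intervals_meet f u v).
{ move=> u v; rewrite /I' /extension /intervals_meet -/m -/Mx.
  have := Hm u; have := Hm v; have := HM u; have := HM v.
  have := Hfv u; have := Hfv v.
  case: (B u); case: (B v) => /= Fv Fu HMv HMu Hmv Hmu; split => //.
  all: try (by move=> H; apply H).
  all: move=> _; split.
  all: try (have := Fu isT); try (have := Fv isT); try (have := HMv isT); try (have := HMu isT);
       try (have := Hmv isT); try (have := Hmu isT); move=> *; lra. }
split.
- split.
  + move=> I /In_rcons [HI|->]; first by apply HIsint.
    exists (fun w => if B w then f w else (m, Rplus Mx 1)); split.
      move=> u _; case Hu: (B u); [exact: Hfv | rewrite /=; lra].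
    have Hg : forall u v, intervals_meet (fun w => if B w then f w else (m, Rplus Mx 1)) u v
        <-> (B u -> B v -> intervals_meet f u v).
    { move=> u v; rewrite /intervals_meet.
      have := Hm u; have := Hm v; have := HM u; have := HM v.
      have := Hfv u; have := Hfv v.
      case: (B u); case: (B v) => /= Fv Fu HMv HMu Hmv Hmu; split => //.
      all: try (by move=> H; apply H).
      all: move=> _; split.
      all: try (have := Fu isT); try (have := Fv isT); try (have := HMv isT); try (have := HMu isT);
           try (have := Hmv isT); try (have := Hmu isT); move=> *; lra. }
    move=> u v; rewrite /rep_graph HI' Hg; tauto.
  + move=> u v Huv.
    have -> : (forall I, List.In I calB -> I u v) <->
      ((forall I, List.In I Is' -> I u v) /\ rep_graph I' u v).
      split; first by move=> H; split; [move=> I HI; apply H; apply/In_rcons; left |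
        apply H; apply/In_rcons; right].
      by move=> [H1 H2] I /In_rcons [HI|->] //; apply H1.
    rewrite -HIsE // /rep_graph HI' /E'.
    have := Hf u v.
    have T : true = true by [].
    have F : false <> true by [].
    case: (B u); case: (B v) => /= H; [have := H isT isT Huv | | |]; tauto.
- move=> Js [HJint HJE].
  have [Ks [Hsz [HKs HKE]]] := double _ B _ HJint.
  have Hbox : box_rep E' Ks.
    split => // u v Huv; rewrite HKE // -HJE // /E'; tauto.
  have := HIsmin Ks Hbox; rewrite Hsz /calB size_rcons addn1 ltnS => ->; done.
Qed.
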